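(* The following are equivalent: (i) $S$ is strongly graded, i.e. $S_gS_h=S_{gh}$ for all $g,h\in G$; (ii) $S$ is symmetrically graded and, for every $g\in G$, every symmetrically graded left $S$-module $M$ with $M_g=0$ is the zero module.
   Context: $G$ is a group with identity $e$; $S=\bigoplus_{g\in G}S_g$ is an associative unital ring graded by $G$ ($S_gS_h\subseteq S_{gh}$), $R=S_e$, and $XY$ denotes the set of finite sums of products $xy$, $x\in X$, $y\in Y$. $S$ is symmetrically graded if $S_gS_{g^{-1}}S_g=S_g$ for every $g\in G$. A graded left $S$-module is $M=\bigoplus_g M_g$ with $S_gM_h\subseteq M_{gh}$; it is (left) symmetrically graded if $M_g=S_gS_{g^{-1}}M_g$ for every $g\in G$. *)

(* Defs.v *)
From HB Require Import structures.
From mathcomp Require Import all_boot all_algebra.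
From Stdlib Require List.
Set Implicit Arguments. Unset Strict Implicit. Unset Printing Implicit Defensive.
Import GRing.Theory.
Local Open Scope ring_scope.

(* An abstract (possibly infinite) group, given by its operations and axioms. *)
Record group := Group {
  gcar :> Type;
  gmul : gcar -> gcar -> gcar;
  gone : gcar;
  ginv : gcar -> gcar;
  gmulA : forall x y z, gmul x (gmul y z) = gmul (gmul x y) z;
  gmul1l : forall x, gmul gone x = x;
  gmul1r : forall x, gmul x gone = x;
  gmulVl : forall x, gmul (ginv x) x = gone;
  gmulVr : forall x, gmul x (ginv x) = gone }.

Definition sumprod (A B : Type) (C : nmodType) (op : A -> B -> C)
  (X : A -> Prop) (Y : B -> Prop) : C -> Prop :=
  fun c => exists s : seq (A * B),
    List.Forall (fun p => X p.1 /\ Y p.2) s /\ c = \sum_(p <- s) op p.1 p.2.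

Definition direct_sum_decomposition (G : group) (V : zmodType)
  (X : G -> V -> Prop) : Prop :=
  (forall g, X g 0 /\ (forall x y, X g x -> X g y -> X g (x - y))) /\
  (forall v : V, exists s : seq (G * V),
     List.Forall (fun p => X p.1 p.2) s /\ v = \sum_(p <- s) p.2) /\
  (forall s : seq (G * V), List.NoDup (map fst s) ->
     List.Forall (fun p => X p.1 p.2) s -> \sum_(p <- s) p.2 = 0 ->
     List.Forall (fun p => p.2 = 0) s).

Definition graded_ring (G : group) (S : pzRingType) (Sg : G -> S -> Prop) : Prop :=
  direct_sum_decomposition Sg /\
  (forall g h x, sumprod *%R (Sg g) (Sg h) x -> Sg (gmul g h) x).

Definition strongly_graded (G : group) (S : pzRingType) (Sg : G -> S -> Prop) : Prop :=
  forall g h x, sumprod *%R (Sg g) (Sg h) x <-> Sg (gmul g h) x.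

Definition symmetrically_graded (G : group) (S : pzRingType) (Sg : G -> S -> Prop) : Prop :=
  forall g x, sumprod *%R (sumprod *%R (Sg g) (Sg (ginv g))) (Sg g) x <-> Sg g x.

Definition graded_module (G : group) (S : pzRingType) (Sg : G -> S -> Prop)
  (M : lmodType S) (Mg : G -> M -> Prop) : Prop :=
  direct_sum_decomposition Mg /\
  (forall g h m, sumprod (fun (s : S) (v : M) => s *: v) (Sg g) (Mg h) m ->
     Mg (gmul g h) m).

Definition symmetrically_graded_module (G : group) (S : pzRingType)
  (Sg : G -> S -> Prop) (M : lmodType S) (Mg : G -> M -> Prop) : Prop :=
  forall g m, Mg g m <->
    sumprod (fun (s : S) (v : M) => s *: v)
      (sumprod *%R (Sg g) (Sg (ginv g))) (Mg g) m.

(* Main.v *)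
Require Import Defs.
From HB Require Import structures.
From mathcomp Require Import all_boot all_algebra.
Local Open Scope ring_scope.
From mathcomp Require Import boolp.
Set Implicit Arguments. Unset Strict Implicit. Unset Printing Implicit Defensive.
Local Open Scope quotient_scope.
Import GRing.Theory.
Local Open Scope ring_scope.

Lemma Forall_mem (U : eqType) (P : U -> Prop) (l : seq U) x :
  List.Forall P l -> x \in l -> P x.
Proof.
elim=> [|y l' Hy _ IH] //; rewrite in_cons => /orP [/eqP -> //|]; exact: IH.
Qed.

Lemma Forall_intro (U : Type) (P : U -> Prop) (l : seq U) :
  (forall x, P x) -> List.Forall P l.
Proof. by move=> H; elim: l => [|y l IH]; constructor. Qed.

Lemma mem_In (U : eqType) (l : seq U) x : x \in l -> List.In x l.
Proof.
elim: l => [|y l IH] //; rewrite in_cons => /orP [/eqP ->|H]; [by left|right; exact: IH].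
Qed.

Lemma uniq_NoDup (U : eqType) (l : seq U) : uniq l -> List.NoDup l.
Proof.
elim: l => [|y l IH] /=; first by constructor.
move=> /andP [Hy Hl]; constructor; last exact: IH.
move=> Hin; move/negP: Hy; apply.
elim: l Hin {IH Hl} => [|z l IH] //= [->|H]; rewrite in_cons ?eqxx //.
by apply/orP; right; apply: IH.
Qed.

Lemma NoDup_notin (U : eqType) (l : seq U) x : ~ List.In x l -> x \notin l.
Proof. by move=> H; apply/negP => /mem_In. Qed.

Section Homog.
Variables (T : eqType) (V : zmodType) (X : T -> V -> Prop).
Hypothesis X0 : forall g, X g 0.
Hypothesis XB : forall g x y, X g x -> X g y -> X g (x - y).
Hypothesis Xind : forall s : seq (T * V), List.NoDup (map fst s) ->
  List.Forall (fun p => X p.1 p.2) s -> \sum_(p <- s) p.2 = 0 ->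
  List.Forall (fun p => p.2 = 0) s.

Lemma XD g x y : X g x -> X g y -> X g (x + y).
Proof.
move=> Hx Hy; have -> : x + y = x - (0 - y) by rewrite sub0r opprK.
by apply: XB => //; apply: XB.
Qed.

Lemma Xfilt (s : seq (T * V)) d :
  List.Forall (fun p => X p.1 p.2) s -> X d (\sum_(p <- s | p.1 == d) p.2).
Proof.
elim=> [|p s' Hp _ IH]; first by rewrite big_nil; apply: X0.
rewrite big_cons; case: eqP => [Hd|_] //; apply: XD => //; by rewrite -Hd.
Qed.

Lemma partition_sum (s : seq (T * V)) (D : seq T) :
  uniq D -> all (fun p => p.1 \in D) s ->
  \sum_(p <- s) p.2 = \sum_(d <- D) \sum_(p <- s | p.1 == d) p.2.
Proof.
move=> uD; elim: s => [|p s IH] /=.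
  by rewrite big_nil big1 // => d _; rewrite big_nil.
move=> /andP [HpD Hs]; rewrite big_cons IH //.
under [RHS]eq_bigr => d _ do rewrite big_cons.
have -> : \sum_(d <- D) (if p.1 == d then p.2 + \sum_(j <- s | j.1 == d) j.2
                          else \sum_(j <- s | j.1 == d) j.2)
   = \sum_(d <- D) ((if p.1 == d then p.2 else 0) + \sum_(j <- s | j.1 == d) j.2).
  by apply: eq_bigr => d _; case: ifP; rewrite ?add0r.
rewrite big_split /=; congr (_ + _).
rewrite (bigD1_seq p.1) //= eqxx big1 ?addr0 // => d; rewrite eq_sym => /negbTE ->.
done.
Qed.

Lemma homog_unique (s t : seq (T * V)) :
  List.Forall (fun p => X p.1 p.2) s -> List.Forall (fun p => X p.1 p.2) t ->
  \sum_(p <- s) p.2 = \sum_(p <- t) p.2 ->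
  forall d, \sum_(p <- s | p.1 == d) p.2 = \sum_(p <- t | p.1 == d) p.2.
Proof.
move=> Hs Ht Hst d.
set D := undup (map fst (s ++ t)).
set F := fun d => \sum_(p <- s | p.1 == d) p.2 - \sum_(p <- t | p.1 == d) p.2.
have allD : forall u, u \in s ++ t -> u.1 \in D.
  by move=> u Hu; rewrite mem_undup; apply: map_f.
have H : List.Forall (fun p => p.2 = 0) [seq (e, F e) | e <- D].
  apply: Xind.
  - by rewrite -map_comp map_id; apply: uniq_NoDup; apply: undup_uniq.
  - by apply/List.Forall_map; apply: Forall_intro => e /=; apply: XB; apply: Xfilt.
  - rewrite big_map /= /F sumrB -!partition_sum ?undup_uniq ?Hst ?subrr //.
    + by apply/allP => u Hu; apply: allD; rewrite mem_cat Hu orbT.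
    + by apply/allP => u Hu; apply: allD; rewrite mem_cat Hu.
case: (boolP (d \in D)) => HdD.
  have := Forall_mem H (map_f (fun e => (e, F e)) HdD) => /= /eqP.
  by rewrite /F subr_eq0 => /eqP.
rewrite !big1_seq // => u /andP [/eqP Hu Hin]; move: HdD; rewrite -Hu allD //;
  by rewrite mem_cat Hin ?orbT.
Qed.

Lemma homog_pick (s : seq (T * V)) : List.NoDup (map fst s) ->
  List.Forall (fun p => \sum_(q <- s | q.1 == p.1) q.2 = p.2) s.
Proof.
elim: s => [|p s IH] /= Hnd; first by constructor.
inversion Hnd as [|a b Hnotin Hnd' Heq]; subst.
have Hn := NoDup_notin Hnotin.
constructor.
  rewrite big_cons eqxx big1_seq ?addr0 // => q /andP [/eqP Hq Hin].
  by move: Hn; rewrite -Hq map_f.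
apply/List.Forall_forall => q Hin.
have Hq := proj1 (List.Forall_forall _ _) (IH Hnd') q Hin.
rewrite big_cons; case: eqP => [Hpq|_] //.
by exfalso; apply: Hnotin; rewrite Hpq; apply: List.in_map.
Qed.
End Homog.
Section Quot.
Variables (R : pzRingType) (P : R -> Prop).

Definition lid : R -> Prop := sumprod *%R (fun _ => True) P.

Lemma lid0 : lid 0.
Proof. by exists [::]; split => //; rewrite big_nil. Qed.

Lemma lidD x y : lid x -> lid y -> lid (x + y).
Proof.
move=> [s [Hs ->]] [t [Ht ->]]; exists (s ++ t); split; last by rewrite big_cat.
by apply/List.Forall_app.
Qed.

Lemma lidM a x : lid x -> lid (a * x).
Proof.
move=> [s [Hs ->]]; exists [seq (a * p.1, p.2) | p <- s]; split.
  apply/List.Forall_map; apply: List.Forall_impl Hs => p [_ H]; by split.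
by rewrite big_map mulr_sumr; apply: eq_bigr => p _; rewrite mulrA.
Qed.

Lemma lidN x : lid x -> lid (- x).
Proof. by move=> H; rewrite -mulN1r; apply: lidM. Qed.

Lemma lidB x y : lid x -> lid y -> lid (x - y).
Proof. by move=> Hx Hy; apply: lidD => //; apply: lidN. Qed.

Lemma lidP x : P x -> lid x.
Proof.
move=> H; exists [:: (1, x)]; split; first by constructor.
by rewrite big_seq1 mul1r.
Qed.

Definition qe (x y : R) : bool := `[< lid (x - y) >].

Lemma qe_refl : reflexive qe.
Proof. by move=> x; apply/asboolP; rewrite subrr; apply: lid0. Qed.
Lemma qe_sym : symmetric qe.
Proof.
move=> x y; apply/asboolP/asboolP => H; rewrite -opprB; exact: lidN.
Qed.
Lemma qe_trans : transitive qe.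
Proof.
move=> y x z /asboolP H1 /asboolP H2; apply/asboolP.
have -> : x - z = (x - y) + (y - z) by rewrite addrA subrK.
exact: lidD.
Qed.

Canonical qe_equiv := EquivRel qe qe_refl qe_sym qe_trans.

Definition qtype := {eq_quot qe}.
HB.instance Definition _ : EqQuotient _ qe qtype := EqQuotient.on qtype.
HB.instance Definition _ := Choice.on qtype.

Definition qpi (x : R) : qtype := \pi_qtype x.

Lemma qpiP x y : qpi x = qpi y <-> lid (x - y).
Proof.
split => [H|H].
  have : qe x y by apply/(@eqquotP _ _ qtype); exact: H.
  by move/asboolP.
apply/(@eqquotP _ qe qtype); exact/asboolP.
Qed.

Lemma qpi_repr (a : qtype) : qpi (repr a) = a.
Proof. exact: reprK. Qed.

Definition qzero : qtype := qpi 0.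
Definition qadd (a b : qtype) : qtype := qpi (repr a + repr b).
Definition qopp (a : qtype) : qtype := qpi (- repr a).
Definition qscale (r : R) (a : qtype) : qtype := qpi (r * repr a).

Lemma qreprE x : lid (repr (qpi x) - x).
Proof. by apply/qpiP; rewrite qpi_repr. Qed.

Lemma qaddE x y : qadd (qpi x) (qpi y) = qpi (x + y).
Proof.
apply/qpiP; have -> : repr (qpi x) + repr (qpi y) - (x + y)
   = (repr (qpi x) - x) + (repr (qpi y) - y).
  by rewrite opprD !addrA; congr (_ + _); rewrite addrAC.
by apply: lidD; apply: qreprE.
Qed.

Lemma qoppE x : qopp (qpi x) = qpi (- x).
Proof. apply/qpiP; rewrite -opprD; apply: lidN; exact: qreprE. Qed.

Lemma qscaleE r x : qscale r (qpi x) = qpi (r * x).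
Proof. apply/qpiP; rewrite -mulrBr; apply: lidM; exact: qreprE. Qed.

Lemma qind (Q : qtype -> Prop) : (forall x, Q (qpi x)) -> forall a, Q a.
Proof. by move=> H a; rewrite -(qpi_repr a). Qed.

Lemma qaddA : associative qadd.
Proof. by elim/qind=> x; elim/qind=> y; elim/qind=> z; rewrite !qaddE addrA. Qed.
Lemma qaddC : commutative qadd.
Proof. by elim/qind=> x; elim/qind=> y; rewrite !qaddE addrC. Qed.
Lemma qadd0 : left_id qzero qadd.
Proof. by elim/qind=> x; rewrite qaddE add0r. Qed.
Lemma qaddN : left_inverse qzero qopp qadd.
Proof. by elim/qind=> x; rewrite qoppE qaddE addNr. Qed.

HB.instance Definition _ := GRing.isZmodule.Build qtype qaddA qaddC qadd0 qaddN.

Lemma qpiD x y : qpi (x + y) = qpi x + qpi y.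
Proof. exact: (esym (qaddE x y)). Qed.

Lemma qscaleA a b v : qscale a (qscale b v) = qscale (a * b) v.
Proof. by elim/qind: v => x; rewrite !qscaleE mulrA. Qed.
Lemma qscale1 : left_id 1 qscale.
Proof. by elim/qind=> x; rewrite qscaleE mul1r. Qed.
Lemma qscaleDr : right_distributive qscale +%R.
Proof. move=> a u v; elim/qind: u => x; elim/qind: v => y; by rewrite -(qpiD x y) !qscaleE mulrDr qpiD.
Qed.
Lemma qscaleDl v : {morph qscale^~ v: a b / a + b}.
Proof. by elim/qind: v => x a b; rewrite !qscaleE mulrDl qpiD. Qed.

HB.instance Definition _ := GRing.Zmodule_isLmodule.Build R qtype qscaleA qscale1 qscaleDr qscaleDl.

Lemma qpi0 : qpi 0 = 0.
Proof. by []. Qed.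
Lemma qpiZ r x : qpi (r * x) = r *: qpi x.
Proof. by rewrite -qscaleE. Qed.
Lemma qpi_eq0 x : qpi x = 0 <-> lid x.
Proof. by rewrite -qpi0 qpiP subr0. Qed.
End Quot.

Lemma Forall_filter (U : Type) (P : U -> Prop) (f : pred U) (l : seq U) :
  List.Forall (fun x => f x -> P x) l -> List.Forall P [seq x <- l | f x].
Proof. elim=> [|y l' Hy _ IH] //=; case: ifP => Hf; [constructor; auto|done]. Qed.

Section GroupFacts.
Variable G : group.
Lemma gsolve (a h d : G) : gmul a h = d -> a = gmul d (ginv h).
Proof. by move=> <-; rewrite -gmulA gmulVr gmul1r. Qed.
Lemma gcancel (g h : G) : gmul (gmul g (ginv h)) h = g.
Proof. by rewrite -gmulA gmulVl gmul1r. Qed.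
Lemma gcancel2 (g h : G) : gmul (gmul g h) (ginv h) = g.
Proof. by rewrite -gmulA gmulVr gmul1r. Qed.
Lemma gmid (g h : G) : gmul (gmul h (ginv g)) (gmul g (ginv h)) = gmul h (ginv h).
Proof. by rewrite -gmulA (gmulA (ginv g)) gmulVl gmul1l. Qed.
End GroupFacts.

Section Graded.
Variables (G : group) (S : pzRingType) (Sg : G -> S -> Prop).
Hypothesis HS : graded_ring Sg.
Local Notation T := {classic (gcar G)}.

Lemma Sg0 g : Sg g 0.
Proof. by case: HS => [[H _] _]; case: (H g). Qed.
Lemma SgB g x y : Sg g x -> Sg g y -> Sg g (x - y).
Proof. by case: HS => [[H _] _]; case: (H g) => _; apply. Qed.
Lemma Sgind : forall s : seq (T * S), List.NoDup (map fst s) ->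
  List.Forall (fun p => Sg p.1 p.2) s -> \sum_(p <- s) p.2 = 0 ->
  List.Forall (fun p => p.2 = 0) s.
Proof. by case: HS => [[_ [_ H]] _]. Qed.
Lemma Sgdec x : exists s : seq (T * S),
  List.Forall (fun p => Sg p.1 p.2) s /\ x = \sum_(p <- s) p.2.
Proof. by case: HS => [[_ [H _]] _]. Qed.
Lemma SgM g h a b : Sg g a -> Sg h b -> Sg (gmul g h) (a * b).
Proof.
move=> Ha Hb; case: HS => _ H; apply: H; exists [:: (a, b)]; split.
  by constructor.
by rewrite big_seq1.
Qed.
Lemma SgD g x y : Sg g x -> Sg g y -> Sg g (x + y).
Proof. exact: (@XD T S Sg Sg0 SgB). Qed.

Lemma expand (Q : S -> Prop) (l : seq (S * S)) :
  List.Forall (fun p => Q p.2) l -> exists Y : seq (T * (S * S)),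
  List.Forall (fun y => Sg y.1 y.2.1 /\ Q y.2.2) Y /\
  \sum_(p <- l) p.1 * p.2 = \sum_(y <- Y) y.2.1 * y.2.2.
Proof.
elim=> [|p l' Hp _ [Y [HY HsY]]].
  by exists [::]; split; [constructor|rewrite !big_nil].
have [s [Hs Hps]] := Sgdec p.1.
exists ([seq (q.1, (q.2, p.2)) | q <- s] ++ Y); split.
  apply/List.Forall_app; split => //; apply/List.Forall_map.
  by apply: List.Forall_impl Hs => q Hq.
by rewrite big_cat big_cons /= HsY big_map /= {1}Hps mulr_suml.
Qed.

Lemma lid_sum (h : G) (U : Type) (W : seq U) (f : U -> S) (P : pred U) :
  List.Forall (fun w => lid (Sg h) (f w)) W -> lid (Sg h) (\sum_(w <- W | P w) f w).
Proof.
elim=> [|w W' Hw _ IH]; first by rewrite big_nil; apply: lid0.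
by rewrite big_cons; case: ifP => _ //; apply: lidD.
Qed.

Lemma keyB (d h : G) x : Sg d x -> lid (Sg h) x ->
  sumprod *%R (Sg (gmul d (ginv h))) (Sg h) x.
Proof.
move=> Hd [l [Hl Hx]].
have [Y [HY HlY]] := expand (Q := Sg h) (List.Forall_impl _ (fun p H => proj2 H) Hl).
set W := [seq ((gmul y.1 h : T), y.2.1 * y.2.2) | y <- Y].
have HW : List.Forall (fun p => Sg p.1 p.2) W.
  apply/List.Forall_map; apply: List.Forall_impl HY => y [H1 H2] /=.
  exact: SgM.
have H1 : List.Forall (fun p => Sg p.1 p.2) [:: ((d : T), x)] by constructor.
have H2 : \sum_(p <- [:: ((d : T), x)]) p.2 = \sum_(p <- W) p.2.
  by rewrite big_seq1 big_map -HlY Hx.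
have := @homog_unique T S Sg Sg0 SgB Sgind _ W H1 HW H2 (d : T).
rewrite big_cons eqxx big_nil addr0 big_map /= => ->.
exists [seq y.2 | y <- Y & (gmul y.1 h : T) == d]; split.
  apply/List.Forall_map; apply: Forall_filter.
  apply: List.Forall_impl HY => y [H3 H4] /eqP /= Hyd.
  by split => //; rewrite -(gsolve Hyd).
by rewrite big_map big_filter.
Qed.

Lemma keyA (h : G) (s : seq (T * S)) : List.NoDup (map fst s) ->
  List.Forall (fun p => Sg p.1 p.2) s -> lid (Sg h) (\sum_(p <- s) p.2) ->
  List.Forall (fun p => lid (Sg h) p.2) s.
Proof.
move=> Hnd Hs [l [Hl Hx]].
have [Y [HY HlY]] := expand (Q := Sg h) (List.Forall_impl _ (fun p H => proj2 H) Hl).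
set W := [seq ((gmul y.1 h : T), y.2.1 * y.2.2) | y <- Y].
have Hu := @homog_unique T S Sg Sg0 SgB Sgind s W Hs.
have HW : List.Forall (fun p => Sg p.1 p.2) W.
  apply/List.Forall_map; apply: List.Forall_impl HY => y [H1 H2] /=.
  exact: SgM.
have HsW : \sum_(p <- s) p.2 = \sum_(p <- W) p.2 by rewrite Hx big_map -HlY.
apply: List.Forall_impl (homog_pick Hnd) => p <-.
rewrite (Hu HW HsW); apply: lid_sum; apply/List.Forall_map.
apply: List.Forall_impl HY => y [_ H2] /=; apply: lidM; exact: lidP.
Qed.
End Graded.

Lemma sum_Forall0 (U : Type) (V : nmodType) (f : U -> V) (l : seq U) :
  List.Forall (fun x => f x = 0) l -> \sum_(x <- l) f x = 0.
Proof. elim=> [|y l' Hy _ IH]; by rewrite ?big_nil // big_cons Hy IH addr0. Qed.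

Lemma sumprod_ext (A B : Type) (C : nmodType) (op : A -> B -> C)
  (X X' : A -> Prop) (Y : B -> Prop) z :
  (forall y, X y <-> X' y) -> sumprod op X Y z <-> sumprod op X' Y z.
Proof.
move=> E; split => [[l [Hl ->]]|[l [Hl ->]]]; exists l; split => //;
  apply: List.Forall_impl Hl => p [H1 H2]; split => //;
  first [exact: (proj1 (E _) H1) | exact: (proj2 (E _) H1)].
Qed.

Section QuotGraded.
Variables (G : group) (S : pzRingType) (Sg : G -> S -> Prop).
Hypothesis HS : graded_ring Sg.
Hypothesis Hsym : symmetrically_graded Sg.
Variable h : G.
Local Notation T := {classic (gcar G)}.
Local Notation M := (qtype (Sg h)).
Local Notation pi := (qpi (Sg h)).

Definition Mg (k : G) (m : M) : Prop := exists s, Sg k s /\ m = pi s.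

Lemma qpiN x : pi (- x) = - pi x.
Proof. exact: (esym (qoppE (Sg h) x)). Qed.
Lemma qpiB x y : pi (x - y) = pi x - pi y.
Proof. by rewrite qpiD qpiN. Qed.
Lemma qpi_sum (U : Type) (l : seq U) (f : U -> S) :
  pi (\sum_(x <- l) f x) = \sum_(x <- l) pi (f x).
Proof. exact: (big_morph pi (qpiD (Sg h)) (qpi0 (Sg h))). Qed.

Lemma Mg0 k : Mg k 0.
Proof. by exists 0; split; [apply: Sg0|rewrite qpi0]. Qed.
Lemma Mg_sum k (U : Type) (f : U -> M) (l : seq U) :
  List.Forall (fun x => Mg k (f x)) l -> Mg k (\sum_(x <- l) f x).
Proof.
elim=> [|y l' Hy _ IH]; first by rewrite big_nil; apply: Mg0.
rewrite big_cons; case: Hy => [s [Hs ->]]; case: IH => [t [Ht ->]].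
by exists (s + t); split; [apply: SgD|rewrite qpiD].
Qed.

Lemma lift (s : seq (G * M)) : List.Forall (fun p => Mg p.1 p.2) s ->
  exists s' : seq (T * S), List.Forall (fun p => Sg p.1 p.2) s' /\
    [seq (p.1, pi p.2) | p <- s'] = s.
Proof.
elim=> [|[k m] l' [t [Ht Em]] _ [s' [Hs' E]]]; first by exists [::].
by exists (((k : T), t) :: s'); split; [constructor|rewrite /= E -Em].
Qed.

Lemma M_graded : graded_module Sg (M := M) Mg.
Proof.
split; first split.
- move=> k; split; first exact: Mg0.
  move=> a b [s [Hs ->]] [t [Ht ->]].
  by exists (s - t); split; [apply: SgB|rewrite qpiB].
split.
- move=> v; have [s [Hs Hv]] := Sgdec HS (repr v).
  exists [seq (p.1, pi p.2) | p <- s]; split.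
    apply/List.Forall_map; apply: List.Forall_impl Hs => p Hp.
    by exists p.2.
  by rewrite big_map /= -qpi_sum -Hv qpi_repr.
- move=> s Hnd Hs Hsum; have [s' [Hs' E]] := lift Hs.
  subst s; move: Hnd Hsum; rewrite -map_comp big_map /= -qpi_sum => Hnd /qpi_eq0 Hl.
  have Hnd' : List.NoDup (map fst s') by [].
  have := keyA HS Hnd' Hs' Hl => HA.
  apply/List.Forall_map; apply: List.Forall_impl HA => p Hp /=.
  exact/qpi_eq0.
- move=> a b m [l [Hl ->]]; apply: Mg_sum.
  apply: List.Forall_impl Hl => p [Hp1 [t [Ht ->]]].
  by exists (p.1 * t); split; [apply: SgM|rewrite qpiZ].
Qed.

Lemma M_sym : symmetrically_graded_module Sg (M := M) Mg.
Proof.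
move=> k m; split.
- move=> [s [Hs ->]]; have [l [Hl Es]] := proj2 (Hsym k s) Hs.
  exists [seq (p.1, pi p.2) | p <- l]; split.
    apply/List.Forall_map; apply: List.Forall_impl Hl => p [H1 H2]; split => //.
    by exists p.2.
  by rewrite big_map /= Es qpi_sum; apply: eq_bigr => p _; rewrite qpiZ.
- move=> [l [Hl ->]]; apply: Mg_sum.
  apply: List.Forall_impl Hl => p [Hp1 [t [Ht ->]]].
  have Hp : Sg (gmul k (ginv k)) p.1 by case: HS => _; apply.
  exists (p.1 * t); split; last by rewrite qpiZ.
  suff : Sg (gmul (gmul k (ginv k)) k) (p.1 * t) by rewrite gcancel.
  exact: SgM.
Qed.

Lemma M_h0 (m : M) : Mg h m <-> m = 0.
Proof.
split; first by move=> [s [Hs ->]]; apply/qpi_eq0; apply: lidP.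
by move=> ->; apply: Mg0.
Qed.
End QuotGraded.

Theorem mainTheorem6 (G : group) (S : pzRingType) (Sg : G -> S -> Prop)
  (HS : graded_ring Sg) :
  strongly_graded Sg <->
  (symmetrically_graded Sg /\
   forall (g : G) (M : lmodType S) (Mg : G -> M -> Prop),
     graded_module Sg Mg -> symmetrically_graded_module Sg Mg ->
     (forall m : M, Mg g m <-> m = 0) ->
     forall m : M, m = 0).
Proof.
split.
- move=> ST; split.
  + move=> g x.
    have E : forall y, sumprod *%R (Sg g) (Sg (ginv g)) y <-> Sg (gone G) y.
      by move=> y; have := ST g (ginv g) y; rewrite gmulVr.
    rewrite (sumprod_ext _ _ _ E); have := ST (gone G) g x; by rewrite gmul1l.
  + move=> g M Mg HM HMs HMg m.
    have Hz : forall k n, Mg k n -> n = 0.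
      move=> k n /(HMs k n) [l [Hl ->]]; apply: sum_Forall0.
      apply: List.Forall_impl Hl => p [Hu Hv].
      have : Sg (gmul (gmul k (ginv g)) (gmul g (ginv k))) p.1.
        by rewrite gmid; apply/ST.
      move=> /ST [l' [Hl' ->]]; rewrite scaler_suml; apply: sum_Forall0.
      apply: List.Forall_impl Hl' => q [Ha Hb]; rewrite -scalerA.
      have : Mg g (q.2 *: p.2).
        suff : Mg (gmul (gmul g (ginv k)) k) (q.2 *: p.2) by rewrite gcancel.
        case: HM => _; apply.
        by exists [:: (q.2, p.2)]; split; [constructor|rewrite big_seq1].
      by move/HMg => ->; rewrite scaler0.
    case: HM => [[_ [Hdec _]] _]; have [s [Hs ->]] := Hdec m.
    apply: sum_Forall0; apply: List.Forall_impl Hs => p; exact: Hz.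
- move=> [Hsym Hmod] g h x; split; first by case: HS => _; apply.
  move=> Hx.
  have key := Hmod h _ _ (M_graded HS h) (@M_sym _ _ Sg HS Hsym h) (@M_h0 _ _ Sg HS h).
  have /qpi_eq0 Hl := key (qpi (Sg h) x).
  by have := keyB HS Hx Hl; rewrite gcancel2.
Qed.
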